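(* Let $N\ge3$, $\mu\ge0$, assume (K0) and (F0), and let $p>p_S(\alpha)$. There exist $\varepsilon_0>0$ and $C_0>0$ such that for every $\varepsilon\in(0,\varepsilon_0]$ there is $\rho>0$ with the following property: if $\zeta>0$ and $r_1\in(0,\rho)$ satisfy $$|u(r_1,\zeta)-\gamma r_1^{-\theta}|\le\varepsilon r_1^{-\theta}\quad\text{and}\quad |u_r(r_1,\zeta)+\theta\gamma r_1^{-1-\theta}|\le\varepsilon r_1^{-1-\theta},$$ then $r_0(\zeta)>\rho$ and for all $r\in(r_1,\rho]$, $$|u(r,\zeta)-\gamma r^{-\theta}|\le C_0\varepsilon r^{-\theta},\qquad |u_r(r,\zeta)+\theta\gamma r^{-1-\theta}|\le C_0\varepsilon r^{-1-\theta}.$$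
   Context: (K0): $K:(0,\infty)\to(0,\infty)$ is continuous and $K(r)=(k_0+o(1))r^{\alpha}$ as $r\to0$ for some $\alpha>-2$, $k_0>0$. (F0): $f:(0,\infty)\to[0,\infty)$ is continuous, not identically zero, and $f(r)=O(r^{\nu})$ as $r\to0$ for some $\nu>-2$. $p_S(\alpha)=\frac{N+2+2\alpha}{N-2}$, $\theta:=\frac{2+\alpha}{p-1}$, $\gamma:=k_0^{-1/(p-1)}\big(\theta(N-2-\theta)\big)^{1/(p-1)}$. For $\zeta>0$, $u(\cdot,\zeta)$ denotes the regular solution of $u''+\frac{N-1}{r}u'+K(r)\max\{u,0\}^p+\mu f(r)=0$ with $u(0)=\zeta$, i.e. the continuous solution on $[0,\infty)$ of $u(r)=\zeta-\int_0^r\frac{s^{2-N}-r^{2-N}}{N-2}s^{N-1}\big(K(s)\max\{u(s),0\}^p+\mu f(s)\big)ds$; $r_0(\zeta)\in(0,\infty]$ is its first zero ($r_0(\zeta)=\infty$ if $u(\cdot,\zeta)>0$ on $(0,\infty)$). *)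

(* Defs.v *)
From Stdlib Require Import Reals Lra.
From Coquelicot Require Import Coquelicot.
Open Scope R_scope.

(* max{x,0}^p for real p (p > 1 in our use), with the convention 0^p = 0. *)
Definition pospow (x p : R) : R :=
  if Rle_dec x 0 then 0 else Rpower x p.

Definition K0 (K : R -> R) (alpha k0 : R) : Prop :=
  (forall r, 0 < r -> 0 < K r) /\
  (forall r, 0 < r -> continuous K r) /\
  alpha > -2 /\ k0 > 0 /\
  filterlim (fun r => K r / Rpower r alpha) (at_right 0) (locally k0).

Definition F0 (f : R -> R) (nu : R) : Prop :=
  (forall r, 0 < r -> 0 <= f r) /\
  (forall r, 0 < r -> continuous f r) /\
  (exists r, 0 < r /\ f r <> 0) /\
  nu > -2 /\
  (exists C delta, 0 < delta /\
     forall r, 0 < r < delta -> Rabs (f r) <= C * Rpower r nu).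

Definition pS (N : nat) (alpha : R) : R := (INR N + 2 + 2 * alpha) / (INR N - 2).
Definition theta (alpha p : R) : R := (2 + alpha) / (p - 1).
Definition gamma (N : nat) (alpha k0 p : R) : R :=
  Rpower k0 (- (1 / (p - 1))) *
  Rpower (theta alpha p * (INR N - 2 - theta alpha p)) (1 / (p - 1)).

Definition kern (N : nat) (K f : R -> R) (mu p : R) (v : R -> R) (r s : R) : R :=
  (/ s ^ (N - 2) - / r ^ (N - 2)) / (INR N - 2) * s ^ (N - 1)
  * (K s * pospow (v s) p + mu * f s).

(* v is the regular solution with v(0) = zeta: continuous on [0,oo) and
   v(r) = zeta - int_0^r kern ds for r > 0 (improper Riemann integral at 0+;
   the integrand is nonnegative and continuous on (0,r]). *)
Definition regular_solution (N : nat) (K f : R -> R) (mu p : R)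
    (v : R -> R) (zeta : R) : Prop :=
  v 0 = zeta /\
  (forall r, 0 <= r ->
     filterlim v (within (fun x => 0 <= x) (locally r)) (locally (v r))) /\
  (forall r, 0 < r ->
     exists I, is_RInt_gen (kern N K f mu p v r) (at_right 0) (at_point r) I
               /\ v r = zeta - I).

(* First zero r0 in (0, oo] of v (p_infty if v has no zero in (0,oo)). *)
Definition first_zero (v : R -> R) : Rbar :=
  Glb_Rbar (fun r => 0 < r /\ v r = 0).

(* Main.v *)
Require Import Defs.
From Stdlib Require Import Reals Lra Lia Psatz.
From Coquelicot Require Import Coquelicot.
Open Scope R_scope.
Lemma pf_ar : ProperFilter' (at_right 0).
Proof. apply Proper_StrongProper, at_right_proper_filter. Qed.
Lemma pf_ap (r : R) : ProperFilter' (at_point r).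
Proof. apply Proper_StrongProper, at_point_filter. Qed.

Lemma gen_restrict (h : R -> R) (r r' l : R) :
  0 < r -> 0 < r' -> (forall s, 0 < s -> continuous h s) ->
  is_RInt_gen h (at_right 0) (at_point r') l ->
  is_RInt_gen h (at_right 0) (at_point r) (l + RInt h r' r).
Proof.
  intros Hr Hr' Hc H.
  assert (Hex : ex_RInt h r' r).
  { apply (ex_RInt_continuous (V:=R_CompleteNormedModule)). intros z [Hz1 Hz2]. apply Hc.
    apply Rlt_le_trans with (2 := Hz1). apply Rmin_case; auto. }
  apply (RInt_correct (V:=R_CompleteNormedModule)) in Hex. apply is_RInt_gen_at_point in Hex.
  exact (is_RInt_gen_Chasles h r' l (RInt h r' r) H Hex).
Qed.

Lemma locally_pos (r : R) : 0 < r -> locally r (fun y => 0 < y).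
Proof.
  intros Hr. apply (locally_interval _ r 0 p_infty); simpl; auto.
Qed.

Lemma cont_of_derive (f : R -> R) x : ex_derive f x -> continuous f x.
Proof. intro H. apply (ex_derive_continuous (K:=R_AbsRing) (V:=R_NormedModule)); exact H. Qed.

Lemma gen_deriv (h F : R -> R) :
  (forall s, 0 < s -> continuous h s) ->
  (forall c r, 0 < c -> 0 < r -> F r = F c + RInt h c r) ->
  forall r, 0 < r -> is_derive F r (h r).
Proof.
  intros Hc HF r Hr.
  assert (Hc2 : 0 < r/2) by lra.
  assert (HD : is_derive (fun y => F (r/2) + RInt h (r/2) y) r (h r)).
  { replace (h r) with (0 + h r) by ring.
    apply is_derive_Reals. apply (derivable_pt_lim_plus (fun _ => F (r/2))).
    - apply derivable_pt_lim_const.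
    - apply is_derive_Reals. apply (is_derive_RInt (V:=R_NormedModule) h (fun y => RInt h (r/2) y) (r/2) r).
      + assert (Hl : locally r (fun y => r/2 < y)).
        { apply (locally_interval _ r (r/2) p_infty); simpl; auto; lra. }
        apply (filter_imp (fun y => r/2 < y)); auto.
        intros y Hy. apply (RInt_correct (V:=R_CompleteNormedModule)).
        apply (ex_RInt_continuous (V:=R_CompleteNormedModule)). intros z [Hz1 Hz2]. apply Hc.
        apply Rlt_le_trans with (2 := Hz1). apply Rmin_case; lra.
      + apply Hc; auto. }
  apply (is_derive_ext_loc (K:=R_AbsRing) (V:=R_NormedModule)) with (2 := HD).
  apply (filter_imp (fun y => 0 < y)); [| apply locally_pos; auto].
  intros y Hy. symmetry. apply HF; auto.
Qed.

Section Reg.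
Variables (m : nat) (G v : R -> R) (zeta : R).
Hypothesis HGc : forall s, 0 < s -> continuous G s.
Hypothesis HGp : forall s, 0 < s -> 0 <= G s.

Let n := S m.
Let kr (r s : R) := (/ s^n - / r^n) / INR n * s^(S n) * G s.
Let h1 (s : R) := s * G s.
Let h2 (s : R) := s^(S n) * G s.

Hypothesis Hint : forall r, 0 < r -> exists I,
  is_RInt_gen (kr r) (at_right 0) (at_point r) I /\ v r = zeta - I.

Lemma INRn_pos : 0 < INR n.
Proof. unfold n. apply lt_0_INR. lia. Qed.

Lemma kr_cont r s : 0 < s -> continuous (kr r) s.
Proof.
  intros Hs. unfold kr.
  apply (continuous_mult (fun s => (/ s^n - / r^n) / INR n * s^(S n)) G).
  - apply cont_of_derive. assert (0 < s^m) by (apply pow_lt; lra). auto_derive. repeat split; intro Hz; nra.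
  - apply HGc; auto.
Qed.

Lemma h1_cont s : 0 < s -> continuous h1 s.
Proof.
  intros Hs. unfold h1. apply (continuous_mult (fun s => s) G).
  - apply cont_of_derive. auto_derive. auto.
  - apply HGc; auto.
Qed.

Lemma h2_cont s : 0 < s -> continuous h2 s.
Proof.
  intros Hs. unfold h2. apply (continuous_mult (fun s => s^(S n)) G).
  - apply cont_of_derive. auto_derive. auto.
  - apply HGc; auto.
Qed.

Lemma fp_pos (P : R * R -> Prop) (r : R) : 0 < r ->
  (forall a b, 0 < a -> 0 < b -> P (a, b)) ->
  filter_prod (at_right 0) (at_point r) (fun ab => P ab).
Proof.
  intros Hr H. exists (fun a => 0 < a) (fun b => b = r).
  - exists (mkposreal 1 Rlt_0_1). intros y _ Hy. exact Hy.
  - reflexivity.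
  - intros a b Ha Hb. subst b. apply H; auto.
Qed.

Lemma fp_pos2 (P : R * R -> Prop) (r : R) : 0 < r ->
  (forall a, 0 < a < r -> P (a, r)) ->
  filter_prod (at_right 0) (at_point r) (fun ab => P ab).
Proof.
  intros Hr H. exists (fun a => 0 < a < r) (fun b => b = r).
  - exists (mkposreal r Hr). intros y Hy Hy0. split; auto.
    unfold ball in Hy; simpl in Hy. unfold AbsRing_ball, abs, minus, plus, opp in Hy; simpl in Hy.
    apply Rabs_lt_between in Hy. lra.
  - reflexivity.
  - intros a b Ha Hb. subst b. apply H; auto.
Qed.

Lemma h2_gen r : 0 < r -> is_RInt_gen h2 (at_right 0) (at_point r)
   (RInt_gen h2 (at_right 0) (at_point r)).
Proof.
  intros Hr. apply (RInt_gen_correct (V:=R_CompleteNormedModule)); try apply pf_ar; try apply pf_ap.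
  destruct (Hint r Hr) as [I1 [H1 _]].
  assert (H2r : 0 < 2 * r) by lra.
  destruct (Hint (2*r) H2r) as [I2 [H2 _]].
  pose proof (gen_restrict (kr (2*r)) r (2*r) I2 Hr H2r (kr_cont (2*r)) H2) as H3.
  pose proof (is_RInt_gen_minus (Fa:=at_right 0) (Fb:=at_point r) _ _ _ _ H1 H3) as H4.
  set (c := (/ (2*r)^n - / r^n) / INR n).
  assert (Hc : c <> 0).
  { unfold c. assert (0 < r^n) by (apply pow_lt; lra).
    assert (r^n < (2*r)^n).
    { rewrite Rpow_mult_distr. assert (1 < 2^n) by (apply Rlt_pow_R1; unfold n; lra || lia).
      nra. }
    pose proof INRn_pos.
    assert (/ (2*r)^n < / r^n) by (apply Rinv_lt_contravar; nra).
    intro Hz. unfold Rdiv in Hz. apply Rmult_integral in Hz. destruct Hz as [Hz|Hz]; [lra|].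
    apply Rinv_neq_0_compat in Hz; auto. lra. }
  pose proof (is_RInt_gen_scal (Fa:=at_right 0) (Fb:=at_point r) _ (/ c) _ H4) as H5.
  eexists. eapply (is_RInt_gen_ext (Fa:=at_right 0) (Fb:=at_point r)); [| exact H5].
  apply filter_forall. intros [a b] x _. simpl.
  unfold scal, minus, plus, opp; simpl. unfold mult; simpl.
  unfold kr, h2. fold c.
  transitivity (/ c * (c * (x ^ S n * G x))).
  - f_equal. unfold c. unfold Rdiv. ring.
  - field. auto.
Qed.

Let J r := RInt_gen h2 (at_right 0) (at_point r).
Let L r := RInt_gen h1 (at_right 0) (at_point r).

Lemma h1_gen r : 0 < r -> is_RInt_gen h1 (at_right 0) (at_point r) (L r).
Proof.
  intros Hr. apply (RInt_gen_correct (V:=R_CompleteNormedModule)); try apply pf_ar; try apply pf_ap.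
  destruct (Hint r Hr) as [I1 [H1 _]].
  pose proof (is_RInt_gen_scal (Fa:=at_right 0) (Fb:=at_point r) _ (INR n) _ H1) as H2.
  pose proof (is_RInt_gen_scal (Fa:=at_right 0) (Fb:=at_point r) _ (/ r^n) _ (h2_gen r Hr)) as H3.
  pose proof (is_RInt_gen_plus (Fa:=at_right 0) (Fb:=at_point r) _ _ _ _ H2 H3) as H4.
  eexists. eapply (is_RInt_gen_ext (Fa:=at_right 0) (Fb:=at_point r)); [| exact H4].
  apply fp_pos; auto. intros a b Ha Hb x Hx. simpl in Hx.
  assert (Hx0 : 0 < x). { destruct Hx as [Hx _]. apply Rle_lt_trans with (2 := Hx).
    apply Rmin_case; lra. }
  unfold scal, plus; simpl. unfold mult; simpl. unfold kr, h1, h2.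
  pose proof INRn_pos. assert (0 < x^n) by (apply pow_lt; lra).
  assert (0 < r^n) by (apply pow_lt; lra).
  change (x ^ S n) with (x * x ^ n). change (match m with 0%nat => 1 | S _ => INR m + 1 end) with (INR n) in *. change (r * r ^ m) with (r ^ n) in *. field. repeat split; lra.
Qed.

Lemma v_eq r : 0 < r -> v r = zeta - (L r - J r / r^n) / INR n.
Proof.
  intros Hr. destruct (Hint r Hr) as [I1 [H1 Hv]]. rewrite Hv. f_equal.
  pose proof (is_RInt_gen_scal (Fa:=at_right 0) (Fb:=at_point r) _ (/ r^n) _ (h2_gen r Hr)) as H3.
  pose proof (is_RInt_gen_minus (Fa:=at_right 0) (Fb:=at_point r) _ _ _ _ (h1_gen r Hr) H3) as H4.
  pose proof (is_RInt_gen_scal (Fa:=at_right 0) (Fb:=at_point r) _ (/ INR n) _ H4) as H5.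
  assert (H6 : is_RInt_gen (kr r) (at_right 0) (at_point r)
     (scal (/ INR n) (minus (L r) (scal (/ r ^ n) (J r))))).
  { eapply (is_RInt_gen_ext (Fa:=at_right 0) (Fb:=at_point r)); [| exact H5].
    apply fp_pos; auto. intros a b Ha Hb x Hx. simpl in Hx.
    assert (Hx0 : 0 < x). { destruct Hx as [Hx _]. apply Rle_lt_trans with (2 := Hx).
      apply Rmin_case; lra. }
    unfold scal, minus, plus, opp; simpl. unfold mult; simpl. unfold kr, h1, h2.
    pose proof INRn_pos. assert (0 < x^n) by (apply pow_lt; lra).
    assert (0 < r^n) by (apply pow_lt; lra).
    change (x ^ S n) with (x * x ^ n). change (match m with 0%nat => 1 | S _ => INR m + 1 end) with (INR n) in *. change (r * r ^ m) with (r ^ n) in *. field. repeat split; lra. }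
  apply (is_RInt_gen_unique (V:=R_CompleteNormedModule)) in H1; try apply pf_ar; try apply pf_ap.
  apply (is_RInt_gen_unique (V:=R_CompleteNormedModule)) in H6; try apply pf_ar; try apply pf_ap.
  rewrite <- H1, H6. unfold scal, minus, plus, opp; simpl. unfold mult; simpl.
  unfold Rdiv. ring.
Qed.

Lemma J_ch c r : 0 < c -> 0 < r -> J r = J c + RInt h2 c r.
Proof.
  intros Hc Hr. pose proof (gen_restrict h2 r c (J c) Hr Hc h2_cont (h2_gen c Hc)) as H.
  apply (is_RInt_gen_unique (V:=R_CompleteNormedModule)) in H; try apply pf_ar; try apply pf_ap.
  exact H.
Qed.

Lemma L_ch c r : 0 < c -> 0 < r -> L r = L c + RInt h1 c r.
Proof.
  intros Hc Hr. pose proof (gen_restrict h1 r c (L c) Hr Hc h1_cont (h1_gen c Hc)) as H.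
  apply (is_RInt_gen_unique (V:=R_CompleteNormedModule)) in H; try apply pf_ar; try apply pf_ap.
  exact H.
Qed.

Lemma J_nonneg r : 0 < r -> 0 <= J r.
Proof.
  intros Hr.
  pose proof (is_RInt_gen_scal (Fa:=at_right 0) (Fb:=at_point r) _ 0 _ (h2_gen r Hr)) as H0.
  pose proof (RInt_gen_norm (V:=R_CompleteNormedModule) (Fa:=at_right 0) (Fb:=at_point r)
     (fun y => scal 0 (h2 y)) h2 (scal 0 (J r)) (J r)) as HN.
  assert (E0 : forall y : R, norm (scal 0 y) = 0).
  { intros y. unfold norm, scal; simpl. unfold abs, mult; simpl. rewrite Rmult_0_l. apply Rabs_R0. }
  assert (Hle : norm (scal 0 (J r)) <= J r).
  { apply HN; auto.
    - apply fp_pos2; auto. intros a Ha. simpl. lra.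
    - apply fp_pos2; auto. intros a Ha x Hx. simpl in Hx.
      rewrite E0. unfold h2.
      apply Rmult_le_pos. apply pow_le; lra. apply HGp; lra.
    - apply h2_gen; auto. }
  rewrite E0 in Hle. exact Hle.
Qed.

Lemma reg_main : exists J : R -> R, (forall r, 0 < r -> 0 <= J r) /\
  (forall r, 0 < r -> is_derive J r (r^(S n) * G r)) /\
  (forall r, 0 < r -> is_derive v r (- J r / r^(S n))).
Proof.
  exists J. split; [exact J_nonneg|]. split.
  - intros r Hr. exact (gen_deriv h2 J h2_cont J_ch r Hr).
  - intros r Hr.
    pose proof (gen_deriv h2 J h2_cont J_ch r Hr) as HJ.
    pose proof (gen_deriv h1 L h1_cont L_ch r Hr) as HL.
    assert (Hp : is_derive (fun y : R => y ^ n) r (INR n * 1 * r ^ Init.Nat.pred n)).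
    { apply is_derive_pow. apply is_derive_Reals, derivable_pt_lim_id. }
    assert (Hrn : 0 < r ^ n) by (apply pow_lt; lra).
    pose proof (is_derive_div J (fun y => y^n) r _ _ HJ Hp ltac:(lra)) as HD.
    apply is_derive_Reals in HD. apply is_derive_Reals in HL.
    pose proof (derivable_pt_lim_minus _ _ _ _ _ HL HD) as H1.
    pose proof (derivable_pt_lim_scal _ (/ INR n) _ _ H1) as H2.
    pose proof (derivable_pt_lim_minus (fun _ => zeta) _ _ _ _ (derivable_pt_lim_const zeta r) H2) as H3.
    apply is_derive_Reals in H3.
    replace (0 - / INR n * (h1 r - (h2 r * r ^ n - J r * (INR n * 1 * r ^ Init.Nat.pred n)) / (r ^ n) ^ 2))
      with (- J r / r ^ S n) in H3.
    2:{ unfold h1, h2. change (Init.Nat.pred n) with m. change (r ^ S n) with (r * r^n).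
        change (r^n) with (r * r^m) in *. pose proof INRn_pos.
        assert (0 < r^m) by (apply pow_lt; lra). field. repeat split; try lra. }
    apply (is_derive_ext_loc (K:=R_AbsRing) (V:=R_NormedModule)) with
      (l := - J r / r ^ S n) (g := v) in H3.
    + exact H3.
    + apply (filter_imp (fun y => 0 < y)); [| apply locally_pos; auto].
      intros y Hy. rewrite (v_eq y Hy). unfold mult_real_fct, minus_fct. unfold Rdiv. apply Rminus_eq_compat_l. apply Rmult_comm.
Qed.

End Reg.
Lemma cont_eps (f : R -> R) (y : R) : continuity_pt f y ->
  forall eps, 0 < eps -> exists d, 0 < d /\ forall z, Rabs (z - y) < d -> Rabs (f z - f y) < eps.
Proof.
  intros Hc eps He. destruct (Hc eps He) as [d [Hd H]].
  exists d. split; auto. intros z Hz.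
  destruct (Req_dec z y) as [E|E].
  - subst. rewrite Rminus_diag, Rabs_R0. auto.
  - apply (H z). split. split; [exact I | auto]. exact Hz.
Qed.

Lemma barrier (phi dphi : R -> R) (a b L : R) :
  0 < L -> (forall x, a <= x <= b -> is_derive phi x (dphi x)) -> phi a <= L ->
  (forall x, a < x <= b -> L <= phi x <= 2*L -> dphi x <= 0) ->
  forall x, a <= x <= b -> phi x <= L.
Proof.
  intros HL Hd Ha Hneg x0 Hx0.
  destruct (Rle_dec (phi x0) L) as [|Hgt]; auto. exfalso. apply Rnot_le_lt in Hgt.
  assert (Hcont : forall y, a <= y <= b -> continuity_pt phi y).
  { intros y Hy. apply derivable_continuous_pt.
    exists (dphi y). apply is_derive_Reals. apply Hd; auto. }
  set (S := fun y => a <= y <= x0 /\ phi y <= L).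
  destruct (completeness S) as [c [Hub Hleast]].
  { exists x0. intros y [Hy _]. lra. }
  { exists a. split; [lra|auto]. }
  assert (Hac : a <= c) by (apply Hub; split; [lra|auto]).
  assert (Hcx : c <= x0) by (apply Hleast; intros y [Hy _]; lra).
  assert (H2 : forall y, c < y <= x0 -> L < phi y).
  { intros y Hy. destruct (Rlt_le_dec L (phi y)) as [|Hn]; auto.
    assert (y <= c) by (apply Hub; split; [lra|auto]). lra. }
  assert (H1 : phi c <= L).
  { destruct (Rle_dec (phi c) L) as [|Hn]; auto. apply Rnot_le_lt in Hn. exfalso.
    destruct (cont_eps phi c (Hcont c ltac:(lra)) (phi c - L) ltac:(lra)) as [d [Hd0 Hdd]].
    assert (c <= c - d/2).
    { apply Hleast. intros y [Hy Hy2].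
      assert (y <= c) by (apply Hub; split; auto).
      destruct (Rle_dec y (c - d/2)); auto.
      assert (Rabs (y - c) < d) by (apply Rabs_def1; lra).
      specialize (Hdd y H0). apply Rabs_def2 in Hdd. lra. }
    lra. }
  assert (Hcx' : c < x0).
  { destruct (Rle_lt_or_eq_dec _ _ Hcx); auto. subst. lra. }
  destruct (cont_eps phi c (Hcont c ltac:(lra)) L HL) as [d [Hd0 Hdd]].
  set (x2 := Rmin (c + d/2) x0).
  assert (Hx2 : c < x2 <= x0).
  { unfold x2. split. apply Rmin_case; lra. apply Rmin_r. }
  assert (Hx2b : x2 <= c + d/2) by apply Rmin_l.
  destruct (MVT_cor2 phi dphi c x2 ltac:(lra)) as [xi [Heq Hxi]].
  { intros y Hy. apply is_derive_Reals. apply Hd. lra. }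
  assert (Lxi : L < phi xi) by (apply H2; lra).
  assert (Uxi : phi xi < 2 * L).
  { assert (Rabs (xi - c) < d) by (apply Rabs_def1; lra).
    specialize (Hdd xi H). apply Rabs_def2 in Hdd. lra. }
  assert (dphi xi <= 0) by (apply Hneg; lra).
  assert (L < phi x2) by (apply H2; lra).
  nra.
Qed.
Lemma sq_le_abs (x y : R) : 0 <= y -> x * x <= y * y -> Rabs x <= y.
Proof.
  intros Hy H. destruct (Rle_dec (Rabs x) y) as [|Hn]; auto.
  apply Rnot_le_lt in Hn. exfalso.
  assert (E : Rabs x * Rabs x = x * x) by (rewrite <- Rabs_mult; apply Rabs_right; nra).
  nra.
Qed.

Lemma V_lower b w X W : 0 <= w -> W*W + b*X*W + (w + b*b/2)*(X*X) >= (W*W + w*(X*X))/2.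
Proof. intros Hw. pose proof (Rle_0_sqr (W + b*X)). pose proof (Rle_0_sqr X). unfold Rsqr in *. nra. Qed.

Lemma V_upper b w X W : 0 < w ->
  W*W + b*X*W + (w + b*b/2)*(X*X) <= (3/2 + (w + b*b)/w) * (W*W + w*(X*X)).
Proof.
  intros Hw.
  assert (E : (3/2 + (w + b*b)/w) * (W*W + w*(X*X)) =
              3/2*(W*W) + (w+b*b)/w*(W*W) + 3/2*w*(X*X) + (w+b*b)*(X*X)) by (field; lra).
  rewrite E.
  assert (0 <= (w+b*b)/w*(W*W)).
  { apply Rmult_le_pos; [unfold Rdiv; apply Rmult_le_pos; [nra| left; apply Rinv_0_lt_compat; lra]|]; nra. }
  pose proof (Rle_0_sqr (W - b*X)). pose proof (Rle_0_sqr X). unfold Rsqr in *.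
  assert (0 <= w * (X*X)) by nra. nra.
Qed.

Lemma div_nonneg x y : 0 <= x -> 0 < y -> 0 <= x / y.
Proof. intros; unfold Rdiv; apply Rmult_le_pos; [auto | left; apply Rinv_0_lt_compat; auto]. Qed.

Lemma key_ineq b w X W E eps Lam :
  0 < b -> 0 < w -> 0 < eps ->
  4 * (8 + 2*(b*b)/w) * (3/2 + (w + b*b)/w) / (b*b) <= Lam ->
  Lam * (eps*eps) <= W*W + b*X*W + (w + b*b/2)*(X*X) ->
  Rabs E <= b*w/(2*(1+b+w)) * Rabs X + eps ->
  - b * (W*W + w*(X*X)) + (2*W + b*X) * E <= 0.
Proof.
  intros Hb Hw He HL HV HE.
  set (D := W*W + w*(X*X)). set (c := 3/2 + (w + b*b)/w). set (c7 := 8 + 2*(b*b)/w).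
  set (dl := b*w/(2*(1+b+w))).
  set (A := 2*W + b*X).
  assert (Hdl1 : dl * (1+b+w) = b*w/2) by (unfold dl; field; lra).
  assert (Hdl0 : 0 < dl) by (unfold dl; apply Rdiv_lt_0_compat; nra).
  assert (Hdl2 : dl <= b/2) by nra.
  assert (Hdl3 : dl * (1+b) <= b*w/2) by nra.
  assert (s1 : A * E <= Rabs A * (dl * Rabs X + eps)).
  { apply Rle_trans with (Rabs A * Rabs E).
    - rewrite <- Rabs_mult. apply Rle_abs.
    - apply Rmult_le_compat_l; auto. apply Rabs_pos. }
  assert (s2 : Rabs A * Rabs X <= W*W + (1+b)*(X*X)).
  { assert (Rabs A <= 2 * Rabs W + b * Rabs X).
    { unfold A. eapply Rle_trans. apply Rabs_triang.
      rewrite !Rabs_mult, (Rabs_right 2), (Rabs_right b) by lra. lra. }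
    assert (Rabs W * Rabs W = W*W) by (rewrite <- Rabs_mult; apply Rabs_right; nra).
    assert (Rabs X * Rabs X = X*X) by (rewrite <- Rabs_mult; apply Rabs_right; nra).
    pose proof (Rabs_pos X). pose proof (Rabs_pos W).
    pose proof (Rle_0_sqr (Rabs W - Rabs X)). unfold Rsqr in *. nra. }
  assert (s3 : dl * (Rabs A * Rabs X) <= b/2 * D).
  { apply Rle_trans with (dl * (W*W + (1+b)*(X*X))).
    - apply Rmult_le_compat_l; lra.
    - unfold D. pose proof (Rle_0_sqr W). pose proof (Rle_0_sqr X). unfold Rsqr in *. nra. }
  assert (Hc : c * D >= W*W + b*X*W + (w + b*b/2)*(X*X)).
  { unfold c, D. pose proof (V_upper b w X W Hw). lra. }
  assert (HD0 : 0 <= D) by (unfold D; pose proof (Rle_0_sqr W); pose proof (Rle_0_sqr X); unfold Rsqr in *; nra).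
  assert (Hc0 : 0 < c).
  { unfold c. assert (0 <= (w + b*b)/w) by (apply div_nonneg; nra). lra. }
  assert (Hc70 : 0 < c7).
  { unfold c7. assert (0 <= 2*(b*b)/w) by (apply div_nonneg; nra). lra. }
  assert (s4 : A * A <= c7 * D).
  { unfold A, c7, D.
    assert (E1 : (8 + 2*(b*b)/w) * (W*W + w*(X*X)) = 8*(W*W) + 8*w*(X*X) + 2*(b*b)/w*(W*W) + 2*(b*b)*(X*X)) by (field; lra).
    rewrite E1. assert (0 <= 2*(b*b)/w*(W*W)).
    { apply Rmult_le_pos. apply div_nonneg; nra. nra. }
    pose proof (Rle_0_sqr (2*W - b*X)). unfold Rsqr in *. assert (0 <= w*(X*X)) by nra. nra. }
  assert (s6 : 4 * c7 * (eps*eps) <= b*b * D).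
  { assert (Lam * (eps*eps) <= c * D) by lra.
    assert (HL' : 4 * c7 * c <= Lam * (b*b)).
    { unfold c7, c. apply (Rmult_le_compat_r (b*b)) in HL; [|nra].
      replace (4 * (8 + 2 * (b * b) / w) * (3 / 2 + (w + b * b) / w) / (b * b) * (b * b))
        with (4 * (8 + 2 * (b * b) / w) * (3 / 2 + (w + b * b) / w)) in HL by (field; lra). lra. }
    assert (4 * c7 * c * (eps*eps) <= Lam * (b*b) * (eps*eps)) by (apply Rmult_le_compat_r; nra).
    assert (c * (4 * c7 * (eps*eps)) <= c * (b*b*D)) by nra.
    apply Rmult_le_reg_l with c; auto. }
  assert (s7 : Rabs A * eps <= b/2 * D).
  { assert (HH : Rabs (Rabs A * eps) <= b/2*D).
    { apply sq_le_abs. nra.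
      assert (Rabs A * Rabs A = A*A) by (rewrite <- Rabs_mult; apply Rabs_right; nra).
      assert (A*A*(eps*eps) <= c7 * D * (eps*eps)) by (apply Rmult_le_compat_r; nra).
      assert (c7 * (eps*eps) * D <= b*b*D/4 * D) by (apply Rmult_le_compat_r; nra).
      nra. }
    eapply Rle_trans; [apply Rle_abs | exact HH]. }
  fold A. fold D. nra.
Qed.
Lemma quad_deriv (X W : R -> R) r dx dw b w : is_derive X r dx -> is_derive W r dw ->
  is_derive (fun x => W x * W x + b * X x * W x + (w + b*b/2) * (X x * X x)) r
    ((2*W r + b*X r)*dw + (b*W r + (2*w+b*b)*X r)*dx).
Proof.
  intros HX HW.
  assert (eX : ex_derive X r) by (exists dx; auto).
  assert (eW : ex_derive W r) by (exists dw; auto).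
  auto_derive.
  - repeat split; auto.
  - change (Derive (fun x => X x) r) with (Derive X r). change (Derive (fun x => W x) r) with (Derive W r).
    rewrite (is_derive_unique X r dx HX), (is_derive_unique W r dw HW). field.
Qed.

Lemma is_derive_val (f : R -> R) (x l l' : R) : is_derive f x l -> l = l' -> is_derive f x l'.
Proof. intros H E; subst; auto. Qed.

Lemma transform (v D G : R -> R) (th n1 r : R) : 0 < r ->
  is_derive v r (D r) -> is_derive D r (- G r - n1 * D r / r) ->
  is_derive (fun x => Rpower x th * v x) r ((th * (Rpower r th * v r) + Rpower r (th+1) * D r)/r) /\
  is_derive (fun x => Rpower x (th+1) * D x) r
     (((th + 1 - n1) * (Rpower r (th+1) * D r) - Rpower r (th+2) * G r)/r).
Proof.
  intros Hr Hv HD.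
  assert (R1 : forall e, Rpower r (e - 1) = Rpower r e / r).
  { intros e. unfold Rminus. rewrite Rpower_plus, Rpower_Ropp, Rpower_1; auto. }
  assert (R2 : forall e, Rpower r (e + 1) = Rpower r e * r).
  { intros e. rewrite Rpower_plus, Rpower_1; auto. }
  split.
  - assert (H1 : is_derive (fun x => Rpower x th * v x) r (th * Rpower r (th - 1) * v r + Rpower r th * D r)).
    { apply is_derive_Reals. apply (derivable_pt_lim_mult (fun x => Rpower x th) v).
      + apply derivable_pt_lim_power; auto.
      + apply is_derive_Reals; auto. }
    eapply is_derive_val; [exact H1|]. rewrite R1, R2. field. lra.
  - assert (H1 : is_derive (fun x => Rpower x (th+1) * D x) r
       ((th+1) * Rpower r (th + 1 - 1) * D r + Rpower r (th+1) * (- G r - n1 * D r / r))).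
    { apply is_derive_Reals. apply (derivable_pt_lim_mult (fun x => Rpower x (th+1)) D).
      + apply derivable_pt_lim_power; auto.
      + apply is_derive_Reals; auto. }
    eapply is_derive_val; [exact H1|].
    replace (th + 2) with ((th + 1) + 1) by ring.
    rewrite R1, !R2. field. lra.
Qed.

Lemma cont_from_eps (f : R -> R) x :
  (forall eps, 0 < eps -> exists d, 0 < d /\ forall y, Rabs (y - x) < d -> Rabs (f y - f x) < eps) ->
  continuity_pt f x.
Proof.
  intros H eps He. destruct (H eps He) as [d [Hd Hf]]. exists d. split; auto.
  intros y [_ Hy]. apply Hf. exact Hy.
Qed.

Lemma pospow_cont p x : 0 < p -> continuity_pt (fun y => pospow y p) x.
Proof.
  intros Hp. apply cont_from_eps. intros eps He.
  destruct (Rtotal_order x 0) as [Hx|[Hx|Hx]].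
  - exists (- x). split; [lra|]. intros y Hy. apply Rabs_def2 in Hy.
    unfold pospow. destruct (Rle_dec y 0); [|lra]. destruct (Rle_dec x 0); [|lra].
    rewrite Rminus_diag, Rabs_R0. auto.
  - subst x. exists (Rpower eps (/ p)). split; [apply exp_pos|].
    intros y Hy. rewrite Rminus_0_r in Hy.
    unfold pospow. destruct (Rle_dec 0 0); [|lra].
    destruct (Rle_dec y 0). rewrite Rminus_diag, Rabs_R0; auto.
    rewrite Rminus_0_r. apply Rnot_le_lt in n.
    rewrite Rabs_right by (left; apply exp_pos).
    rewrite Rabs_right in Hy by lra.
    replace eps with (Rpower (Rpower eps (/ p)) p).
    + apply Rlt_Rpower_l; auto.
    + rewrite Rpower_mult. replace (/ p * p) with 1 by (field; lra). apply Rpower_1; auto.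
  - assert (Hc : continuity_pt (fun y => Rpower y p) x).
    { apply derivable_continuous_pt. exists (p * Rpower x (p - 1)).
      apply derivable_pt_lim_power; auto. }
    destruct (cont_eps _ x Hc eps He) as [d [Hd Hf]].
    exists (Rmin d x). split. apply Rmin_case; lra.
    intros y Hy. assert (Hy1 : Rabs (y - x) < d) by (eapply Rlt_le_trans; [exact Hy| apply Rmin_l]).
    assert (Hy2 : Rabs (y - x) < x) by (eapply Rlt_le_trans; [exact Hy| apply Rmin_r]).
    apply Rabs_def2 in Hy2.
    unfold pospow. destruct (Rle_dec y 0); [lra|]. destruct (Rle_dec x 0); [lra|].
    apply Hf; auto.
Qed.

Lemma within_cont (v : R -> R) r : 0 < r ->
  filterlim v (within (fun x => 0 <= x) (locally r)) (locally (v r)) ->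
  continuity_pt v r.
Proof.
  intros Hr H. apply continuity_pt_filterlim.
  intros P HP. specialize (H P HP). unfold filtermap, within in *.
  apply (filter_imp (fun x => (0 <= x -> P (v x)) /\ 0 < x)).
  - intros x [H1 H2]. apply H1; lra.
  - apply filter_and; auto. apply locally_pos; auto.
Qed.
Theorem lemma3p6 (N : nat) (mu : R) (K f : R -> R) (alpha k0 nu p : R)
  (u : R -> R -> R) :
  (3 <= N)%nat -> 0 <= mu -> K0 K alpha k0 -> F0 f nu -> p > pS N alpha ->
  (forall zeta, 0 < zeta -> regular_solution N K f mu p (u zeta) zeta) ->
  exists eps0 C0, 0 < eps0 /\ 0 < C0 /\
  forall eps, 0 < eps <= eps0 ->
  exists rho, 0 < rho /\
  forall zeta r1, 0 < zeta -> 0 < r1 < rho ->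
    Rabs (u zeta r1 - gamma N alpha k0 p * Rpower r1 (- theta alpha p))
      <= eps * Rpower r1 (- theta alpha p) ->
    Rabs (Derive (u zeta) r1
          + theta alpha p * gamma N alpha k0 p * Rpower r1 (-1 - theta alpha p))
      <= eps * Rpower r1 (-1 - theta alpha p) ->
    Rbar_lt rho (first_zero (u zeta)) /\
    forall r, r1 < r <= rho ->
      Rabs (u zeta r - gamma N alpha k0 p * Rpower r (- theta alpha p))
        <= C0 * eps * Rpower r (- theta alpha p) /\
      Rabs (Derive (u zeta) r
            + theta alpha p * gamma N alpha k0 p * Rpower r (-1 - theta alpha p))
        <= C0 * eps * Rpower r (-1 - theta alpha p).
Proof.
  intros HN Hmu HK HF Hp Hreg.
  destruct HK as [HKpos [HKc [Hal [Hk0 HKlim]]]].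
  destruct HF as [Hfpos [Hfc [_ [Hnu [Cf [df [Hdf Hfb]]]]]]].
  destruct N as [|[|[|m]]]; try (exfalso; lia).
  assert (HINR : INR (S (S (S m))) = INR m + 3) by (rewrite !S_INR; ring).
  set (d0 := INR m + 1).
  assert (Hd0 : 1 <= d0) by (unfold d0; pose proof (pos_INR m); lra).
  assert (Hd0' : INR (S (S (S m))) - 2 = d0) by (rewrite HINR; unfold d0; ring).
  assert (Hp' : p * d0 > d0 + 4 + 2*alpha).
  { unfold pS in Hp. rewrite Hd0' in Hp. rewrite HINR in Hp.
    apply Rmult_gt_compat_r with (r := d0) in Hp; [|lra].
    replace ((INR m + 3 + 2 + 2 * alpha) / d0 * d0) with (d0 + 4 + 2*alpha) in Hp.
    lra. unfold d0. field. lra. }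
  assert (Hp1 : 1 < p) by nra.
  set (th := theta alpha p).
  assert (Hthp : th * (p - 1) = 2 + alpha) by (unfold th, theta; field; lra).
  assert (Hth : 0 < th) by (unfold th, theta; apply Rdiv_lt_0_compat; lra).
  assert (H2th : 2 * th < d0) by nra.
  set (a := d0 - th). set (b := d0 - 2*th). set (w := (p-1)*th*a).
  assert (Ha : 0 < a) by (unfold a; lra).
  assert (Hb : 0 < b) by (unfold b; lra).
  assert (Hw : 0 < w) by (unfold w; apply Rmult_lt_0_compat; nra).
  set (ga := gamma (S (S (S m))) alpha k0 p).
  assert (Hga0 : 0 < ga) by (unfold ga, gamma; apply Rmult_lt_0_compat; apply exp_pos).
  assert (Hga1 : k0 * Rpower ga (p-1) = th * a).
  { unfold ga, gamma. fold th. rewrite Hd0'. fold a.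
    rewrite <- Rpower_mult_distr by apply exp_pos.
    rewrite !Rpower_mult.
    replace (- (1 / (p - 1)) * (p - 1)) with (-1) by (field; lra).
    replace (1 / (p - 1) * (p - 1)) with 1 by (field; lra).
    replace (Rpower k0 (-1)) with (/ k0).
    2:{ replace (-1) with (- (1)) by ring. rewrite Rpower_Ropp, Rpower_1; auto. }
    rewrite Rpower_1 by nra. field. lra. }
  set (dl := b*w/(2*(1+b+w))).
  assert (Hdl : 0 < dl) by (unfold dl; apply Rdiv_lt_0_compat; nra).
  destruct (derivable_pt_lim_power ga p Hga0 (dl/k0) ltac:(apply Rdiv_lt_0_compat; lra)) as [eta Heta].
  assert (Htay : forall X, Rabs X < eta ->
     Rabs (Rpower (ga+X) p - Rpower ga p - p*Rpower ga (p-1)*X) <= dl/k0 * Rabs X).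
  { intros X HX. destruct (Req_dec X 0) as [E|E].
    - subst X. rewrite Rplus_0_r. replace (Rpower ga p - Rpower ga p - p * Rpower ga (p - 1) * 0) with 0 by ring.
      rewrite Rabs_R0. lra.
    - specialize (Heta X E HX).
      replace (Rpower (ga + X) p - Rpower ga p - p * Rpower ga (p - 1) * X)
        with (X * ((Rpower (ga + X) p - Rpower ga p) / X - p * Rpower ga (p - 1))) by (field; auto).
      rewrite Rabs_mult. rewrite Rmult_comm. apply Rmult_le_compat_r. apply Rabs_pos. lra. }
  set (c := 3/2 + (w + b*b)/w).
  set (c7 := 8 + 2*(b*b)/w).
  assert (Hc0 : 0 < c).
  { unfold c. assert (0 <= (w + b*b)/w) by (apply div_nonneg; nra). lra. }
  assert (Hc70 : 0 < c7).
  { unfold c7. assert (0 <= 2*(b*b)/w) by (apply div_nonneg; nra). lra. }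
  set (Lam := 3/2*((th+1)*(th+1)) + w + b*b + 4*c7*c/(b*b)).
  assert (HLam1 : 4*c7*c/(b*b) <= Lam).
  { unfold Lam. pose proof (Rle_0_sqr (th+1)). pose proof (Rle_0_sqr b). unfold Rsqr in *. lra. }
  assert (HLam0 : 0 < Lam).
  { unfold Lam. assert (0 < 4*c7*c/(b*b)) by (apply Rdiv_lt_0_compat; nra). pose proof (Rle_0_sqr (th+1)). pose proof (Rle_0_sqr b). unfold Rsqr in *. lra. }
  set (eta2 := Rmin (eta/2) (ga/2)).
  assert (Heta2 : 0 < eta2) by (unfold eta2; apply Rmin_case; pose proof (cond_pos eta); lra).
  set (eps0 := eta2 / (1 + 4*Lam/w)).
  assert (H4L : 0 < 4*Lam/w) by (apply Rdiv_lt_0_compat; lra).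
  assert (Heps0 : 0 < eps0) by (unfold eps0; apply Rdiv_lt_0_compat; lra).
  assert (Heps0b : 4*Lam/w * (eps0*eps0) <= eta2*eta2).
  { unfold eps0. set (z := 4*Lam/w). assert (Hz : 0 < z) by exact H4L.
    replace (z * (eta2 / (1 + z) * (eta2 / (1 + z)))) with (eta2*eta2 * (z / ((1+z)*(1+z)))) by (field; lra).
    assert (z / ((1+z)*(1+z)) <= 1).
    { apply Rmult_le_reg_r with ((1+z)*(1+z)). nra. unfold Rdiv. rewrite Rmult_assoc, Rinv_l by (apply Rgt_not_eq; nra). nra. }
    assert (0 <= eta2*eta2) by nra. nra. }
  set (K1 := 1 + 2*Lam/w + 2*Lam).
  assert (HK1 : 1 <= K1) by (unfold K1; assert (0 < 2*Lam/w) by (apply Rdiv_lt_0_compat; lra); lra).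
  exists eps0, ((1+th)*K1). split; [auto|]. split; [nra|].
  intros eps [He He0].
  set (PM := Rpower (3*ga/2) p).
  assert (HPM : 0 < PM) by apply exp_pos.
  set (e1 := eps/(2*(1+PM))).
  assert (He1 : 0 < e1) by (unfold e1; apply Rdiv_lt_0_compat; lra).
  assert (HdK : exists dK, 0 < dK /\ forall r, 0 < r < dK -> Rabs (K r / Rpower r alpha - k0) < e1).
  { specialize (HKlim (ball k0 e1) (locally_ball k0 (mkposreal e1 He1))).
    unfold filtermap, at_right, within in HKlim. destruct HKlim as [d Hd].
    exists d. split; [apply cond_pos|]. intros r [Hr0 Hr1]. apply (Hd r); auto.
    unfold ball; simpl. unfold AbsRing_ball, abs, minus, plus, opp; simpl.
    replace (r + - 0) with r by ring. rewrite Rabs_right; lra. }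
  destruct HdK as [dK [HdK0 HdK]].
  set (s := th + 2 + nu).
  assert (Hs : 0 < s) by (unfold s; lra).
  set (Mf := mu * Rabs Cf).
  assert (HMf : 0 <= Mf) by (unfold Mf; apply Rmult_le_pos; auto; apply Rabs_pos).
  set (Rf := Rpower (eps/(2*(Mf+1))) (/ s)).
  assert (HRf : 0 < Rf) by apply exp_pos.
  set (Rb := Rmin (Rmin dK df) Rf / 2).
  assert (HR : 0 < Rb) by (unfold Rb; repeat apply Rmin_case; lra).
  assert (HRK : Rb < dK) by (unfold Rb; assert (Rmin (Rmin dK df) Rf <= dK) by
    (eapply Rle_trans; [apply Rmin_l| apply Rmin_l]); lra).
  assert (HRf' : Rb < df) by (unfold Rb; assert (Rmin (Rmin dK df) Rf <= df) by
    (eapply Rle_trans; [apply Rmin_l| apply Rmin_r]); lra).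
  assert (HRR : Rb < Rf) by (unfold Rb; assert (Rmin (Rmin dK df) Rf <= Rf) by apply Rmin_r; lra).
  assert (HFbound : forall r, 0 < r <= Rb -> mu * (Rpower r (th+2) * f r) <= eps/2).
  { intros r Hr.
    assert (f r <= Rabs Cf * Rpower r nu).
    { eapply Rle_trans; [apply Rle_abs|]. eapply Rle_trans; [apply Hfb; lra|].
      apply Rmult_le_compat_r; [left; apply exp_pos| apply Rle_abs]. }
    assert (Rpower r s < eps/(2*(Mf+1))).
    { replace (eps/(2*(Mf+1))) with (Rpower Rf s).
      - apply Rlt_Rpower_l; auto. lra.
      - unfold Rf. rewrite Rpower_mult. replace (/ s * s) with 1 by (field; lra).
        apply Rpower_1. apply Rdiv_lt_0_compat; lra. }
    assert (Rpower r (th+2) * Rpower r nu = Rpower r s) by (unfold s; symmetry; apply Rpower_plus).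
    assert (0 <= f r) by (apply Hfpos; lra).
    assert (0 < Rpower r (th+2)) by apply exp_pos.
    assert (mu * (Rpower r (th+2) * f r) <= Mf * Rpower r s).
    { unfold Mf. rewrite <- H1. 
      assert (Rpower r (th+2) * f r <= Rpower r (th+2) * (Rabs Cf * Rpower r nu)) by (apply Rmult_le_compat_l; lra).
      nra. }
    assert (Mf * Rpower r s <= Mf * (eps/(2*(Mf+1)))) by (apply Rmult_le_compat_l; lra).
    assert (Mf * (eps/(2*(Mf+1))) <= eps/2).
    { apply Rmult_le_reg_r with (2*(Mf+1)). lra.
      replace (Mf * (eps / (2 * (Mf + 1))) * (2 * (Mf + 1))) with (Mf * eps) by (field; lra).
      nra. }
    lra. }
  exists (Rb/2). split; [lra|].
  intros zeta r1 Hz Hr1 HX1 HY1.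
  destruct (Hreg zeta Hz) as [Hv0 [Hvc Hvint]].
  set (v := u zeta) in *.
  set (G := fun s => K s * pospow (v s) p + mu * f s).
  assert (HGc : forall s, 0 < s -> continuous G s).
  { intros s0 Hs0. unfold continuous. apply continuity_pt_filterlim. unfold G.
    apply continuity_pt_plus.
    - apply continuity_pt_mult.
      + apply continuity_pt_filterlim. apply HKc; auto.
      + apply (continuity_pt_comp v (fun y => pospow y p)).
        * apply within_cont; auto. apply Hvc; lra.
        * apply pospow_cont; lra.
    - apply continuity_pt_mult.
      + apply continuity_pt_const. intros x y; reflexivity.
      + apply continuity_pt_filterlim. apply Hfc; auto. }
  assert (Hpp : forall y, 0 <= pospow y p).
  { intros y. unfold pospow. destruct (Rle_dec y 0); [lra| left; apply exp_pos]. }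
  assert (HGp : forall s, 0 < s -> 0 <= G s).
  { intros s0 Hs0. unfold G. pose proof (HKpos s0 Hs0). pose proof (Hfpos s0 Hs0).
    pose proof (Hpp (v s0)). nra. }
  assert (Hint : forall r, 0 < r -> exists I,
    is_RInt_gen (fun s => (/ s^(S m) - / r^(S m)) / INR (S m) * s^(S (S m)) * G s)
       (at_right 0) (at_point r) I /\ v r = zeta - I).
  { intros r Hr. destruct (Hvint r Hr) as [I [HI Hvr]]. exists I. split; auto.
    eapply (is_RInt_gen_ext (Fa:=at_right 0) (Fb:=at_point r)); [|exact HI].
    apply filter_forall. intros ab x _. unfold kern, G.
    change (S (S (S m)) - 2)%nat with (S m). change (S (S (S m)) - 1)%nat with (S (S m)).
    rewrite Hd0'. replace d0 with (INR (S m)) by (unfold d0; rewrite S_INR; ring). reflexivity. }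
  destruct (reg_main m G v zeta HGc HGp Hint) as [J [HJ0 [HJd Hvd]]].
  set (D := fun r => - J r / r^(S (S m))).
  assert (HD : forall r, 0 < r -> is_derive D r (- G r - INR (S (S m)) * D r / r)).
  { intros r Hr.
    assert (H1 : is_derive (fun x => - J x) r (- (r^(S (S m)) * G r))).
    { apply is_derive_Reals. apply (derivable_pt_lim_opp J). apply is_derive_Reals; auto. }
    assert (Hp2 : is_derive (fun y : R => y ^ S (S m)) r (INR (S (S m)) * 1 * r ^ Init.Nat.pred (S (S m)))).
    { apply is_derive_pow. apply is_derive_Reals, derivable_pt_lim_id. }
    assert (Hrm : 0 < r ^ m) by (apply pow_lt; lra).
    pose proof (is_derive_div _ _ r _ _ H1 Hp2 ltac:(apply pow_nonzero; lra)) as H3.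
    eapply is_derive_val; [exact H3|]. unfold D. simpl pow. simpl Init.Nat.pred.
    field. split; lra. }
  assert (HDer : forall r, 0 < r -> Derive v r = D r).
  { intros r Hr. apply is_derive_unique. apply Hvd; auto. }
  set (n1 := INR (S (S m))) in *.
  assert (Hn1 : n1 = d0 + 1) by (unfold n1, d0; rewrite !S_INR; ring).
  set (P := fun x => Rpower x th * v x).
  set (Q := fun x => Rpower x (th+1) * D x).
  set (X := fun x => P x - ga).
  set (W := fun x => th * P x + Q x).
  set (dP := fun x => (th * P x + Q x)/x).
  set (dQ := fun x => ((th+1-n1) * Q x - Rpower x (th+2) * G x)/x).
  set (Vf := fun x => W x * W x + b * X x * W x + (w + b*b/2) * (X x * X x)).
  set (dV := fun x => (2*W x + b*X x)*(th * dP x + dQ x) + (b*W x + (2*w+b*b)*X x)*dP x).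
  assert (HVd : forall x, 0 < x -> is_derive Vf x (dV x)).
  { intros x Hx. destruct (transform v D G th n1 x Hx (Hvd x Hx) (HD x Hx)) as [HP HQ].
    assert (HX : is_derive X x (dP x)).
    { apply is_derive_Reals. unfold X. replace (dP x) with (dP x - 0) by ring.
      apply (derivable_pt_lim_minus P (fun _ => ga)). apply is_derive_Reals. exact HP.
      apply derivable_pt_lim_const. }
    assert (HW : is_derive W x (th * dP x + dQ x)).
    { apply is_derive_Reals. unfold W.
      apply (derivable_pt_lim_plus (fun y => th * P y) Q).
      apply derivable_pt_lim_scal. apply is_derive_Reals. exact HP.
      apply is_derive_Reals. exact HQ. }
    exact (quad_deriv X W x (dP x) (th * dP x + dQ x) b w HX HW). }
  assert (Heta2a : eta2 <= eta/2) by apply Rmin_l.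
  assert (Heta2b : eta2 <= ga/2) by apply Rmin_r.
  assert (Hreg2 : forall x, Vf x <= 2*(Lam*(eps*eps)) -> Rabs (X x) <= eta2).
  { intros x Hx. pose proof (V_lower b w (X x) (W x) ltac:(lra)) as HL.
    fold (Vf x) in HL. change (W x * W x + b * X x * W x + (w + b * b / 2) * (X x * X x)) with (Vf x) in HL.
    assert (HXX : w * (X x * X x) <= 4*Lam*(eps*eps)).
    { pose proof (Rle_0_sqr (W x)). unfold Rsqr in *. lra. }
    assert (eps*eps <= eps0*eps0) by nra.
    assert (4*Lam*(eps0*eps0) <= w*(eta2*eta2)).
    { apply Rmult_le_compat_l with (r := w) in Heps0b; [|lra].
      replace (w * (4 * Lam / w * (eps0 * eps0))) with (4*Lam*(eps0*eps0)) in Heps0b by (field; lra).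
      lra. }
    apply sq_le_abs; [lra|]. nra. }
  assert (Hpow1 : forall x e, 0 < x -> Rpower x e * Rpower x (- e) = 1).
  { intros x e Hx. rewrite <- Rpower_plus. replace (e + - e) with 0 by ring. apply Rpower_O; auto. }
  assert (Hgap : Rpower ga p = Rpower ga (p-1) * ga).
  { replace p with ((p-1)+1) at 1 by ring. rewrite Rpower_plus, Rpower_1; auto. }
  assert (Hsign : forall x, r1 < x <= Rb -> Lam*(eps*eps) <= Vf x <= 2*(Lam*(eps*eps)) -> dV x <= 0).
  { intros x Hx [HV1 HV2]. assert (Hx0 : 0 < x) by lra.
    pose proof (Hreg2 x HV2) as HXa.
    assert (HXb : - eta2 <= X x <= eta2) by (apply Rabs_le_between; auto).
    assert (HPx : ga/2 <= P x <= 3*ga/2) by (unfold X in HXb; lra).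
    assert (Hrt : 0 < Rpower x th) by apply exp_pos.
    assert (Hrmt : 0 < Rpower x (- th)) by apply exp_pos.
    assert (Hvx : v x = P x * Rpower x (- th)).
    { unfold P. rewrite Rmult_comm, <- Rmult_assoc, (Rmult_comm _ (Rpower x th)), Hpow1; auto. ring. }
    assert (Hvpos : 0 < v x) by (rewrite Hvx; apply Rmult_lt_0_compat; lra).
    assert (Hpp1 : pospow (v x) p = Rpower (P x) p * Rpower x (- th * p)).
    { unfold pospow. destruct (Rle_dec (v x) 0); [lra|]. rewrite Hvx.
      rewrite <- Rpower_mult_distr by lra. rewrite Rpower_mult. reflexivity. }
    set (kap := K x / Rpower x alpha).
    assert (HT : Rpower x (th+2) * G x = kap * Rpower (P x) p + mu * (Rpower x (th+2) * f x)).
    { unfold G. rewrite Hpp1. unfold kap.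
      assert (Rpower x (th+2) * Rpower x (- th * p) = / Rpower x alpha).
      { rewrite <- Rpower_plus. replace (th + 2 + - th * p) with (- alpha) by nra.
        apply Rpower_Ropp. }
      assert (0 < Rpower x alpha) by apply exp_pos.
      replace (K x / Rpower x alpha) with (K x * (Rpower x (th+2) * Rpower x (- th * p)))
        by (rewrite H; unfold Rdiv; ring). ring. }
    assert (Hkap : Rabs (kap - k0) < e1) by (apply HdK; lra).
    assert (Hfx : mu * (Rpower x (th+2) * f x) <= eps/2) by (apply HFbound; lra).
    assert (Hfx0 : 0 <= mu * (Rpower x (th+2) * f x)).
    { apply Rmult_le_pos; auto. apply Rmult_le_pos. left; apply exp_pos. apply Hfpos; lra. }
    assert (HPp : Rpower (P x) p <= PM) by (apply Rle_Rpower_l; lra).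
    assert (HPp0 : 0 < Rpower (P x) p) by apply exp_pos.
    assert (HXeta : Rabs (X x) < eta) by (pose proof (cond_pos eta); lra).
    pose proof (Htay (X x) HXeta) as Ht.
    replace (ga + X x) with (P x) in Ht by (unfold X; ring).
    set (E := p*th*a*X x + a*th*ga - Rpower x (th+2) * G x).
    assert (HEid : E = - k0 * (Rpower (P x) p - Rpower ga p - p * Rpower ga (p - 1) * X x)
                       - (kap - k0) * Rpower (P x) p - mu * (Rpower x (th+2) * f x)).
    { unfold E. rewrite HT, Hgap. replace (p*th*a*X x + a*th*ga) with (p*(th*a)*X x + (th*a)*ga) by ring. rewrite <- Hga1. ring. }
    assert (HEb : Rabs E <= dl * Rabs (X x) + eps).
    { rewrite HEid.
      assert (Htri : forall A B C, Rabs (A - B - C) <= Rabs A + Rabs B + Rabs C).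
      { intros A B C. unfold Rminus. eapply Rle_trans. apply Rabs_triang.
        rewrite Rabs_Ropp. apply Rplus_le_compat_r. eapply Rle_trans. apply Rabs_triang.
        rewrite Rabs_Ropp. lra. }
      eapply Rle_trans. apply Htri.
      rewrite (Rabs_right (mu * _)) by lra.
      rewrite Rabs_mult, (Rabs_left (- k0)) by lra. rewrite Ropp_involutive.
      rewrite Rabs_mult, (Rabs_right (Rpower (P x) p)) by lra.
      assert (k0 * Rabs (Rpower (P x) p - Rpower ga p - p * Rpower ga (p - 1) * X x) <= dl * Rabs (X x)).
      { apply Rmult_le_compat_l with (r := k0) in Ht; [|lra].
        replace (k0 * (dl / k0 * Rabs (X x))) with (dl * Rabs (X x)) in Ht by (field; lra). exact Ht. }
      assert (Rabs (kap - k0) * Rpower (P x) p <= e1 * PM).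
      { apply Rmult_le_compat; try lra; apply Rabs_pos. }
      assert (e1 * PM <= eps/2).
      { unfold e1. apply Rmult_le_reg_r with (2*(1+PM)). lra.
        replace (eps / (2 * (1 + PM)) * PM * (2 * (1 + PM))) with (eps*PM) by (field; lra). nra. }
      lra. }
    assert (Hid : x * dV x = - b * (W x * W x + w * (X x * X x)) + (2 * W x + b * X x) * E).
    { unfold dV, dP, dQ, E, W, X, w, b, a. rewrite Hn1. field. lra. }
    assert (Hk : - b * (W x * W x + w * (X x * X x)) + (2 * W x + b * X x) * E <= 0).
    { apply key_ineq with (eps := eps) (Lam := Lam); auto.
    }
    nra. }
  assert (Hr10 : 0 < r1) by lra.
  assert (HX0 : Rabs (X r1) <= eps).
  { assert (E1 : X r1 = Rpower r1 th * (v r1 - ga * Rpower r1 (- th))).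
    { unfold X, P. rewrite Rmult_minus_distr_l.
      replace (Rpower r1 th * (ga * Rpower r1 (- th))) with (ga * (Rpower r1 th * Rpower r1 (- th))) by ring.
      rewrite Hpow1; auto. ring. }
    rewrite E1, Rabs_mult, (Rabs_right (Rpower r1 th)) by (left; apply exp_pos).
    replace eps with (Rpower r1 th * (eps * Rpower r1 (- th))).
    apply Rmult_le_compat_l; [left; apply exp_pos| exact HX1].
    replace (Rpower r1 th * (eps * Rpower r1 (- th))) with (eps * (Rpower r1 th * Rpower r1 (- th))) by ring.
    rewrite Hpow1; auto. ring. }
  assert (HQ0 : Rabs (Q r1 + th * ga) <= eps).
  { rewrite HDer in HY1 by auto.
    assert (Hp1' : Rpower r1 (th+1) * Rpower r1 (-1 - th) = 1).
    { replace (-1 - th) with (- (th+1)) by ring. apply Hpow1; auto. }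
    assert (E1 : Q r1 + th * ga = Rpower r1 (th+1) * (D r1 + th * ga * Rpower r1 (-1 - th))).
    { unfold Q. rewrite Rmult_plus_distr_l.
      replace (Rpower r1 (th+1) * (th * ga * Rpower r1 (-1 - th))) with (th * ga * (Rpower r1 (th+1) * Rpower r1 (-1 - th))) by ring.
      rewrite Hp1'. ring. }
    rewrite E1, Rabs_mult, (Rabs_right (Rpower r1 (th+1))) by (left; apply exp_pos).
    replace eps with (Rpower r1 (th+1) * (eps * Rpower r1 (-1 - th))).
    apply Rmult_le_compat_l; [left; apply exp_pos| exact HY1].
    replace (Rpower r1 (th+1) * (eps * Rpower r1 (-1 - th))) with (eps * (Rpower r1 (th+1) * Rpower r1 (-1 - th))) by ring.
    rewrite Hp1'. ring. }
  assert (HW0 : Rabs (W r1) <= (th+1)*eps).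
  { replace (W r1) with (th * X r1 + (Q r1 + th*ga)) by (unfold W, X; ring).
    eapply Rle_trans. apply Rabs_triang. rewrite Rabs_mult, (Rabs_right th) by lra. nra. }
  assert (HV0 : Vf r1 <= Lam * (eps*eps)).
  { assert (Hsq : forall A k, Rabs A <= k -> A * A <= k * k).
    { intros A k HA. assert (Rabs A * Rabs A = A * A) by (rewrite <- Rabs_mult; apply Rabs_right; nra).
      pose proof (Rabs_pos A). nra. }
    pose proof (Hsq _ _ HW0). pose proof (Hsq _ _ HX0).
    assert (Vf r1 <= 3/2 * (W r1 * W r1) + (w + b*b) * (X r1 * X r1)).
    { unfold Vf. pose proof (Rle_0_sqr (W r1 - b * X r1)). unfold Rsqr in *. nra. }
    assert (0 <= 4*c7*c/(b*b)) by (apply div_nonneg; nra).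
    assert ((w + b*b) * (X r1 * X r1) <= (w + b*b) * (eps*eps)) by (apply Rmult_le_compat_l; nra).
    unfold Lam. nra. }
  assert (HLpos : 0 < Lam * (eps*eps)) by (apply Rmult_lt_0_compat; nra).
  assert (Hbar : forall x, r1 <= x <= Rb -> Vf x <= Lam * (eps*eps)).
  { apply (barrier Vf dV r1 Rb (Lam*(eps*eps)) HLpos); auto.
    intros x Hx. apply HVd. lra. }
  assert (HvP : forall y, 0 < y -> v y = Rpower y (- th) * P y).
  { intros y Hy. unfold P. rewrite <- Rmult_assoc, (Rmult_comm (Rpower y (- th))), Hpow1; auto. ring. }
  assert (Hsmall : forall y, r1 <= y <= Rb -> Rabs (X y) <= eta2).
  { intros y Hy. apply Hreg2. pose proof (Hbar y Hy). lra. }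
  assert (Hpos1 : forall y, r1 <= y <= Rb -> 0 < v y).
  { intros y Hy. rewrite HvP by lra. apply Rmult_lt_0_compat. apply exp_pos.
    pose proof (Hsmall y Hy). apply Rabs_le_between in H. unfold X in H. lra. }
  assert (Hpos : forall y, 0 < y <= Rb -> 0 < v y).
  { intros y Hy. destruct (Rle_dec r1 y) as [Hle|Hlt].
    - apply Hpos1; lra.
    - apply Rnot_le_lt in Hlt.
      destruct (MVT_cor2 v D y r1 Hlt) as [c0 [Heq Hcc]].
      { intros c1 Hc1. apply is_derive_Reals. apply Hvd. lra. }
      assert (D c0 <= 0).
      { unfold D. assert (0 < c0 ^ S (S m)) by (apply pow_lt; lra).
        pose proof (HJ0 c0 ltac:(lra)). unfold Rdiv.
        assert (0 < / c0 ^ S (S m)) by (apply Rinv_0_lt_compat; auto). nra. }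
      pose proof (Hpos1 r1 ltac:(lra)). nra. }
  split.
  - unfold first_zero. destruct (Glb_Rbar_correct (fun r => 0 < r /\ v r = 0)) as [Hlb Hglb].
    assert (Hle : Rbar_le Rb (Glb_Rbar (fun r => 0 < r /\ v r = 0))).
    { apply Hglb. intros y [Hy0 Hy1]. simpl. destruct (Rle_dec y Rb) as [Hle|Hgt].
      - pose proof (Hpos y (conj Hy0 Hle)). lra.
      - lra. }
    eapply Rbar_lt_le_trans; [| exact Hle]. simpl. lra.
  - intros r [Hr1' Hr2'].
    assert (Hr0 : 0 < r) by lra.
    assert (HVr : Vf r <= Lam * (eps*eps)) by (apply Hbar; lra).
    pose proof (V_lower b w (X r) (W r) ltac:(lra)) as HL.
    change (W r * W r + b * X r * W r + (w + b * b / 2) * (X r * X r)) with (Vf r) in HL.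
    assert (HK1w : 2*Lam <= w*K1).
    { unfold K1. replace (w * (1 + 2 * Lam / w + 2 * Lam)) with (w + 2*Lam + 2*Lam*w) by (field; lra). nra. }
    assert (HXr : Rabs (X r) <= K1 * eps).
    { apply sq_le_abs; [nra|].
      assert (w * (X r * X r) <= w * (K1 * (eps*eps))).
      { pose proof (Rle_0_sqr (W r)). unfold Rsqr in *. nra. }
      assert (X r * X r <= K1 * (eps*eps)) by (apply Rmult_le_reg_l with w; lra).
      nra. }
    assert (HWr : Rabs (W r) <= K1 * eps).
    { apply sq_le_abs; [nra|].
      assert (0 <= w * (X r * X r)) by (pose proof (Rle_0_sqr (X r)); unfold Rsqr in *; nra).
      assert (W r * W r <= K1 * (eps*eps)).
      { assert (2 * Lam <= K1) by (unfold K1; assert (0 < 2*Lam/w) by (apply Rdiv_lt_0_compat; lra); lra).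
        nra. }
      nra. }
    assert (Hrt : 0 < Rpower r (- th)) by apply exp_pos.
    assert (Hrt1 : 0 < Rpower r (-1 - th)) by apply exp_pos.
    split.
    + replace (v r - ga * Rpower r (- th)) with (Rpower r (- th) * X r)
        by (unfold X; rewrite (HvP r Hr0); ring).
      rewrite Rabs_mult, (Rabs_right (Rpower r (- th))) by lra.
      assert (0 <= th * K1 * eps) by (apply Rmult_le_pos; [apply Rmult_le_pos|]; lra).
      assert (Rabs (X r) <= (1 + th) * K1 * eps) by lra.
      rewrite Rmult_comm. apply Rmult_le_compat_r; lra.
    + rewrite HDer by auto.
      assert (Hp1' : Rpower r (th+1) * Rpower r (-1 - th) = 1).
      { replace (-1 - th) with (- (th+1)) by ring. apply Hpow1; auto. }
      replace (D r + th * ga * Rpower r (-1 - th)) with (Rpower r (-1 - th) * (W r - th * X r)).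
      2:{ unfold W, X, Q. replace (Rpower r (-1 - th) * (th * P r + Rpower r (th + 1) * D r - th * (P r - ga)))
            with ((Rpower r (th+1) * Rpower r (-1 - th)) * D r + th * ga * Rpower r (-1 - th)) by ring.
          rewrite Hp1'. ring. }
      rewrite Rabs_mult, (Rabs_right (Rpower r (-1 - th))) by lra.
      assert (Rabs (W r - th * X r) <= (1 + th) * K1 * eps).
      { unfold Rminus. eapply Rle_trans. apply Rabs_triang. rewrite Rabs_Ropp, Rabs_mult, (Rabs_right th) by lra.
        assert (th * Rabs (X r) <= th * (K1 * eps)) by (apply Rmult_le_compat_l; lra). lra. }
      rewrite Rmult_comm. apply Rmult_le_compat_r; lra.
Qed.
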